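(* Let $A$ be a minimal $A_\infty$-algebra over a field supported in non-positive degrees, and let $P$ be a minimal $A_\infty$-module over $A$. Then the ascending degree filtration $P^{(l)}=\bigoplus_{k\le l}P^k$ is a filtration by $A_\infty$-submodules, and the subquotients, which are supported in a single degree, are determined up to $A_\infty$-equivalence by the corresponding representation of $A^0$.
   Context: An $A_\infty$-algebra is minimal if $\mu^1=0$; a module with structure maps $\mu^{1|d}:P\otimes A^{\otimes d}\to P$ of degree $1-d$ is minimal if $\mu^{1|0}=0$. $A^0$ is an ordinary associative algebra under $\mu^2$, and a subquotient concentrated in one degree is an ordinary $A^0$-module via $\mu^{1|1}$. *)

(* Defs.v *)
(* Minimal A-infinity algebras / modules over a field K,
   following Seidel's sign conventions, encoded without tensor products:
   a graded vector space is an lmodType with a family of homogeneous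
   projections, and the structure maps are multilinear maps on lists. *)
From HB Require Import structures.
From mathcomp Require Import all_boot all_order all_algebra.
Set Implicit Arguments. Unset Strict Implicit. Unset Printing Implicit Defensive.
Import Order.TTheory GRing.Theory Num.Theory.
Local Open Scope ring_scope.

Section AinfDefs.
Variable K : fieldType.

Definition grading (V : lmodType K) (pr : int -> V -> V) : Prop :=
  [/\ (forall n c (x y : V), pr n (c *: x + y) = c *: pr n x + pr n y),
      (forall m n (v : V), pr m (pr n v) = if m == n then pr n v else 0) &
      (forall v : V, exists s : seq int, uniq s /\ v = \sum_(n <- s) pr n v)].

Definition homog (V : lmodType K) (pr : int -> V -> V) (n : int) (v : V) : Prop :=
  pr n v = v.

Definition homlist (V : lmodType K) (pr : int -> V -> V) (s : seq V) (ns : seq int) :=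
  size s = size ns /\
  forall i, (i < size s)%N -> homog pr (nth 0 ns i) (nth 0 s i).

Definition sumdeg (ns : seq int) : int := \sum_(n <- ns) n.

Definition koszul (ns : seq int) : int := \sum_(n <- ns) (n - 1).

Definition ksign (z : int) : K := (-1) ^+ `|z|%N.

Definition multilinear (V W : lmodType K) (f : seq V -> W) : Prop :=
  forall (s : seq V) i c (x y : V), (i < size s)%N ->
    f (set_nth 0 s i (c *: x + y)) = c *: f (set_nth 0 s i x) + f (set_nth 0 s i y).

(* mu s with s = [:: x_1; ...; x_d] is mu^d(x_1, ..., x_d) (d >= 1),
   of degree 2 - d.  The A-infinity relations (Seidel's convention, the
   sign collecting the reduced degrees of the arguments to the right of
   the inner operation). *)
Definition is_minimal_Ainf_alg (A : lmodType K) (prA : int -> A -> A)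
    (mu : seq A -> A) : Prop :=
  [/\ grading prA, multilinear mu,
      (forall s ns, homlist prA s ns -> (0 < size s)%N ->
         homog prA (sumdeg ns + 2 - (size s)%:Z) (mu s)),
      (forall x, mu [:: x] = 0) &
      (forall s ns, homlist prA s ns ->
         \sum_(i < (size s).+1) \sum_(m < (size s).+1 | (0 < m)%N && (i + m <= size s)%N)
            ksign (koszul (drop (i + m) ns)) *:
              mu (take i s ++ mu (take m (drop i s)) :: drop (i + m) s) = 0)].

(* mP p s with s = [:: a_1; ...; a_d] is mu^{1|d}(p, a_1, ..., a_d),
   of degree 1 - d. *)
Definition is_minimal_Ainf_mod (A : lmodType K) (prA : int -> A -> A)
    (mu : seq A -> A) (P : lmodType K) (prP : int -> P -> P)
    (mP : P -> seq A -> P) : Prop :=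
  grading prP /\
  [/\ (forall s c (p q : P), mP (c *: p + q) s = c *: mP p s + mP q s),
      (forall p, multilinear (mP p)),
      (forall n p s ns, homog prP n p -> homlist prA s ns ->
         homog prP (n + sumdeg ns + 1 - (size s)%:Z) (mP p s)),
      (forall p, mP p [::] = 0) &
      (forall p s ns, homlist prA s ns ->
         \sum_(k < (size s).+1)
            ksign (koszul (drop k ns)) *: mP (mP p (take k s)) (drop k s)
         + \sum_(i < (size s).+1) \sum_(m < (size s).+1 | (0 < m)%N && (i + m <= size s)%N)
            ksign (koszul (drop (i + m) ns)) *:
              mP p (take i s ++ mu (take m (drop i s)) :: drop (i + m) s) = 0)].

Definition is_Ainf_submodule (A P : lmodType K) (prP : int -> P -> P)
    (mP : P -> seq A -> P) (S : P -> Prop) : Prop :=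
  [/\ S 0,
      (forall c p q, S p -> S q -> S (c *: p + q)),
      (forall n p, S p -> S (prP n p)) &
      (forall p s, S p -> S (mP p s))].

Definition deg_filt (P : lmodType K) (prP : int -> P -> P) (l : int) (p : P) : Prop :=
  forall k, l < k -> prP k p = 0.

(* Structure maps of the subquotient P^{(l)} / P^{(l-1)}, transported along
   the canonical isomorphism P^{(l)} / P^{(l-1)} ~ P^l (induced by prP l):
   mu^{1|d}([p], s) = [mu^{1|d}(p, s)] corresponds to prP l (mP p s). *)
Definition subquot_mu (A P : lmodType K) (prP : int -> P -> P)
    (mP : P -> seq A -> P) (l : int) (p : P) (s : seq A) : P :=
  prP l (mP p s).

Definition rep_A0 (A P : lmodType K) (mP : P -> seq A -> P) (p : P) (a : A) : P :=
  mP p [:: a].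

Definition module_of_rep (A P : lmodType K) (prA : int -> A -> A)
    (rho : P -> A -> P) (p : P) (s : seq A) : P :=
  if size s == 1%N then rho p (prA 0 (head 0 s)) else 0.

End AinfDefs.

(* Main.v *)
Require Import Defs.
From HB Require Import structures.
From mathcomp Require Import all_boot all_order all_algebra.
From mathcomp Require Import zify.
Set Implicit Arguments. Unset Strict Implicit.
Import Order.TTheory GRing.Theory Num.Theory.
Local Open Scope ring_scope.

Section Helpers.
Variable K : fieldType.

Lemma set_nth_nth_id (T : Type) (x0 : T) (s : seq T) k :
  (k < size s)%N -> set_nth x0 s k (nth x0 s k) = s.
Proof.
move=> hk; apply: (@eq_from_nth _ x0).
  by rewrite size_set_nth; apply/maxn_idPr.
by move=> i _; rewrite nth_set_nth /=; case: eqP => // ->.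
Qed.

Lemma pr0 (V : lmodType K) (pr : int -> V -> V) : grading pr -> forall n, pr n 0 = 0.
Proof.
case=> hl _ _ n.
have := hl n (-1) 0 0; rewrite scaler0 addr0 => ->.
by rewrite scaleN1r addNr.
Qed.

Lemma prD (V : lmodType K) (pr : int -> V -> V) : grading pr -> forall n x y, pr n (x + y) = pr n x + pr n y.
Proof. by case=> hl _ _ n x y; rewrite -{1}(scale1r x) hl scale1r. Qed.

Lemma prZ (V : lmodType K) (pr : int -> V -> V) : grading pr -> forall n c x, pr n (c *: x) = c *: pr n x.
Proof. by move=> gg n c x; case: (gg) => hl _ _; rewrite -[c *: x]addr0 hl (pr0 gg) addr0. Qed.

Lemma pr_sum (V : lmodType K) (pr : int -> V -> V) : grading pr ->
  forall n (r : seq int) (F : int -> V), pr n (\sum_(m <- r) F m) = \sum_(m <- r) pr n (F m).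
Proof.
move=> gg n r F; elim: r => [|a r IH]; first by rewrite !big_nil (pr0 gg).
by rewrite !big_cons (prD gg) IH.
Qed.

Lemma homog_other (V : lmodType K) (pr : int -> V -> V) : grading pr ->
  forall m k v, homog pr m v -> k != m -> pr k v = 0.
Proof. by case=> _ hp _ m k v hv hk; rewrite -hv hp (negbTE hk). Qed.

Lemma ml0 (V W : lmodType K) (f : seq V -> W) : multilinear f ->
  forall s i, (i < size s)%N -> f (set_nth 0 s i 0) = 0.
Proof.
move=> fml s i hi; have := fml s i (-1) 0 0 hi.
by rewrite scaler0 addr0 scaleN1r addNr.
Qed.

Lemma ml_expand (A W : lmodType K) (prA : int -> A -> A) (gA : grading prA)
  (hpos : forall (n : int) (a : A), 0 < n -> prA n a = 0)
  (f : seq A -> W) (fml : multilinear f) (Q : W -> Prop) (Q0 : Q 0)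
  (Qlin : forall p q, Q p -> Q q -> Q (p + q)) (s : seq A) :
  (forall t ns, homlist prA t ns -> all (fun n => n <= 0) ns -> size t = size s -> Q (f t)) ->
  Q (f s).
Proof.
move=> base.
have key : forall k (s' : seq A) (ns : seq int), size s' = size s -> size ns = size s' ->
   (forall i, (k <= i < size s')%N -> homog prA (nth 0 ns i) (nth 0 s' i) /\ nth 0 ns i <= 0) ->
   Q (f s').
  elim=> [|k IH] s' ns hs hns H.
    apply: (base s' ns) => //.
      by split=> // i hi; have [] := H i; rewrite ?hi.
    apply/(all_nthP 0) => i hi. rewrite hns in hi; by have [] := H i; rewrite ?hi.
  case: (ltnP k (size s')) => hk; last first.
    apply: (IH s' ns) => // i /andP[h1 h2]; exfalso; lia.
  rewrite -(set_nth_nth_id 0 hk).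
  case: (gA) => _ _ hdec.
  have [sl [_ ->]] := hdec (nth 0 s' k).
  elim: sl => [|n sl IHs]; first by rewrite big_nil (ml0 fml) //.
  rewrite big_cons -[prA n _ + _](congr1 (fun z => z + _) (scale1r _)) fml // scale1r.
  apply: Qlin => //.
  have [hn|hn] := ltrP 0 n.
    by rewrite hpos // (ml0 fml).
  apply: (IH _ (set_nth 0 ns k n)).
  - by rewrite size_set_nth -hs; apply/maxn_idPr.
  - by rewrite !size_set_nth hns.
  move=> i; rewrite size_set_nth (maxn_idPr hk) => /andP[h1 h2].
  rewrite !nth_set_nth /=; case: eqP => [_|ne].
    split=> //; rewrite /homog; case: gA => _ hp _; by rewrite hp eqxx.
  by apply: H; apply/andP; split => //; lia.
apply: (key (size s) s (nseq (size s) 0)) => //; first by rewrite size_nseq.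
by move=> i /andP[h1 h2]; exfalso; lia.
Qed.

Lemma bound_list (r : seq int) : exists l : int, forall n, n \in r -> n <= l.
Proof.
elim: r => [|a r [l IH]]; first by exists 0.
exists (Num.max a l) => n; rewrite inE => /orP[/eqP->|/IH h].
  by rewrite le_max lexx.
by rewrite le_max h orbT.
Qed.

Lemma sumdeg_le0 (ns : seq int) : all (fun n => n <= 0) ns -> sumdeg ns <= 0.
Proof.
rewrite /sumdeg; elim: ns => [|a r IH]; first by rewrite big_nil.
by rewrite big_cons /= => /andP[h1 h2]; rewrite -[0]addr0 lerD // IH.
Qed.

End Helpers.

Unset Implicit Arguments.
Theorem lemma4p5 (K : fieldType) (A : lmodType K) (prA : int -> A -> A)
    (mu : seq A -> A) (P : lmodType K) (prP : int -> P -> P)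
    (mP : P -> seq A -> P) :
  is_minimal_Ainf_alg prA mu ->
  (forall (n : int) (a : A), 0 < n -> prA n a = 0) ->
  is_minimal_Ainf_mod prA mu prP mP ->
  (forall l : int,
     is_Ainf_submodule prP mP (deg_filt prP l) /\
     (forall p, deg_filt prP (l - 1) p -> deg_filt prP l p)) /\
  (forall p : P, exists l : int, deg_filt prP l p) /\
  (forall l : int,
     (forall p a, homog prP l p -> homog prA 0 a -> homog prP l (rep_A0 mP p a)) /\
     (forall p s, homog prP l p ->
        subquot_mu prP mP l p s = module_of_rep prA (rep_A0 mP) p s)).
Proof.
case=> gA _ _ _ _ hpos [gP [mPlin mPml mPdeg mPnil _]].
have mP0 : forall s, mP 0 s = 0.
  by move=> s; have := mPlin s (-1) 0 0; rewrite scaler0 addr0 scaleN1r addNr.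
have mPD : forall s p q, mP (p + q) s = mP p s + mP q s.
  by move=> s p q; rewrite -{1}(scale1r p) mPlin scale1r.
have filt0 : forall l, deg_filt prP l 0 by move=> l k _; rewrite (pr0 gP).
have filtD : forall l p q, deg_filt prP l p -> deg_filt prP l q -> deg_filt prP l (p + q).
  by move=> l p q hp hq k hk; rewrite (prD gP) hp // hq // addr0.
have filt_hom : forall l m v, homog prP m v -> m <= l -> deg_filt prP l v.
  move=> l m v hv hm k hk; apply: (homog_other gP hv).
  by apply/eqP => e; move: hk; rewrite e ltNge hm.
split.
  move=> l; split; last by move=> p hp k hk; apply: hp; lia.
  split; first exact: filt0.
  - by move=> c p q hp hq k hk; case: gP => hl _ _; rewrite hl hp // hq // scaler0 addr0.
  - move=> n p hp k hk; case: gP => _ hpp _; rewrite hpp.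
    by case: eqP => // e; rewrite hp // -e.
  move=> p s hp.
  case: (gP) => _ _ hdec; have [sl [_ ->]] := hdec p.
  elim: sl => [|n sl IH]; first by rewrite big_nil mP0.
  rewrite big_cons mPD; apply: (filtD l) => //.
  have [hn|hn] := ltrP l n; first by rewrite hp // mP0.
  apply: (ml_expand gA hpos (mPml _) (Q := deg_filt prP l) (filt0 l) (filtD l)) => t ns ht hns hsz.
  case: t ht hsz => [|a t'] ht hsz; first by rewrite mPnil.
  apply: (filt_hom _ _ _ (mPdeg n _ _ _ _ ht)).
    by case: gP => _ hpp _; rewrite /homog hpp eqxx.
  have := sumdeg_le0 hns; rewrite /= => h1.
  have : (0 < size (a :: t'))%N by []. move: (size (a :: t')) => z hz.
  lia.
split.
  move=> p; case: (gP) => _ hpp hdec; have [sl [_ e]] := hdec p.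
  have [l hl] := bound_list sl; exists l => k hk.
  rewrite e (pr_sum gP) big1_seq // => n /andP[_ hn].
  rewrite hpp; case: eqP => // ek; exfalso; have := hl _ hn; rewrite -ek.
  by rewrite leNgt hk.
move=> l; split.
  move=> p a hp ha; rewrite /rep_A0.
  have := mPdeg _ _ [:: a] [:: 0] hp; rewrite /sumdeg big_seq1 addr0 addrK; apply.
  by split => // -[|i] //.
move=> p s hp; rewrite /subquot_mu /module_of_rep.
case: s => [|a [|b s']].
- by rewrite mPnil (pr0 gP).
- rewrite /= /rep_A0.
  set g := fun x => mP p [:: x].
  have gD : forall x y, g (x + y) = g x + g y.
    move=> x y; rewrite /g; have := mPml p [:: x] 0 1 x y; rewrite /= !scale1r; by apply.
  have g0 : g 0 = 0 by have := ml0 (mPml p) (s:=[:: 0]) (i:=0%N); apply.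
  rewrite -/(g a) -/(g (prA 0 a)).
  case: (gA) => _ hpA hdec; have [sl [_ e]] := hdec a.
  rewrite {}e; elim: sl => [|n sl IH]; first by rewrite big_nil (pr0 gA) g0 (pr0 gP).
  rewrite big_cons gD (prD gP) IH (prD gA) gD; congr (_ + _).
  have hd : forall m x, homog prA m x -> homog prP (l + m) (g x).
    move=> m x hx; have := mPdeg _ _ [:: x] [:: m] hp.
    rewrite /sumdeg big_seq1 addrK; apply; by split => // -[|i].
  rewrite hpA; case: eqP => [<-|ne].
    have := hd 0 (prA 0 a); rewrite addr0; apply.
    by rewrite /homog hpA eqxx.
  rewrite g0; apply: (homog_other gP (hd n _ _)).
    by rewrite /homog hpA eqxx.
  by apply/eqP => h; apply: ne; lia.
- apply: (ml_expand gA hpos (mPml _) (Q := fun v => prP l v = 0)); first exact: (pr0 gP).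
    by move=> x y hx hy; rewrite (prD gP) hx hy addr0.
  move=> t ns ht hns hsz.
  apply: (homog_other gP (mPdeg _ _ _ _ hp ht)).
  have := sumdeg_le0 hns; rewrite hsz /= => h1.
  apply/eqP => h; move: h1 h; move: (size s') (sumdeg ns) => z w; lia.
Qed.
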